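(* Let $n,m,c\ge 1$, let $P=(V_P,E_P)$ be a graph, let $S\subseteq V_P$, and let $\phi: V_P\to\mathcal P(V(T(n,m,c)))$ be a feasible embedding of $P[S]$ into the Chimera graph $T(n,m,c)$. Define $\phi^\dagger: V_P\to\mathcal P(V(T(2n,2m,c)))$ by $$\phi^\dagger(v)=\bigcup_{(x,y,z)\in\phi(v)} \sigma(x,y,z),$$ where $\sigma(x,y,z)=\{(2x,2y,z),(2x+1,2y,z)\}$ if $0\le z\le c-1$, and $\sigma(x,y,z)=\{(2x,2y,z),(2x,2y+1,z)\}$ if $c\le z\le 2c-1$. Then $\phi^\dagger$ is a feasible embedding of $P[S]$ into $T(2n,2m,c)$.
   Context: Chimera graph $T(n,m,c)$: an $n\times m$ grid of unit cells, each a complete bipartite graph $K_{c,c}$. Its vertices are triples $(x,y,z)$ with $x\in\{0,\dots,n-1\}$ (row index), $y\in\{0,\dots,m-1\}$ (column index), $z\in\{0,\dots,2c-1\}$; vertices with $z\le c-1$ form the left partite set and those with $z\ge c$ the right partite set of cell $(x,y)$. Edges: $(x,y,z)\sim(x,y,z')$ whenever $z\le c-1<z'$ (the $K_{c,c}$ inside a cell); $(x,y,z)\sim(x+1,y,z)$ for $z\le c-1$ and $x+1\le n-1$ (left-partite vertices connect to the corresponding vertex in the adjacent cell of the same column); $(x,y,z)\sim(x,y+1,z)$ for $z\ge c$ and $y+1\le m-1$ (right-partite vertices connect to the corresponding vertex in the adjacent cell of the same row). For $S\subseteq V_P$, $P[S]$ is the subgraph of $P$ induced on $S$. A map $\phi: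 V_P\to\mathcal P(V_H)$ into a hardware graph $H$ is a feasible embedding of $P[S]$ into $H$ if: $\phi(v)=\emptyset$ for $v\notin S$ and $\phi(v)\neq\emptyset$ for $v\in S$; the sets (chains) $\phi(v)$, $v\in V_P$, are pairwise disjoint; each chain $\phi(v)$ induces a connected subgraph of $H$; and for every edge $(u,v)\in E_P$ with $u,v\in S$ there exist $a\in\phi(u)$, $b\in\phi(v)$ with $(a,b)$ an edge of $H$. *)

(* Defs.v *)
From mathcomp Require Import all_boot.
Set Implicit Arguments. Unset Strict Implicit. Unset Printing Implicit Defensive.

Definition chim_vertex (n m c : nat) : finType := ('I_n * 'I_m * 'I_(c + c))%type.

Definition cx n m c (v : chim_vertex n m c) : nat := v.1.1.
Definition cy n m c (v : chim_vertex n m c) : nat := v.1.2.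
Definition cz n m c (v : chim_vertex n m c) : nat := v.2.

Definition chim_step n m c (u w : chim_vertex n m c) : bool :=
  [|| [&& cx u == cx w, cy u == cy w, cz u < c & c <= cz w],
      [&& (cx u).+1 == cx w, cy u == cy w, cz u == cz w & cz u < c]
    | [&& cx u == cx w, (cy u).+1 == cy w, cz u == cz w & c <= cz u]].

Definition chim_adj n m c : rel (chim_vertex n m c) :=
  fun u w => chim_step u w || chim_step w u.

Definition feasible_embedding (V : finType) (E : rel V) (S : {set V})
    (HV : finType) (adjH : rel HV) (phi : V -> {set HV}) : Prop :=
  [/\ (forall v, v \notin S -> phi v = set0),
      (forall v, v \in S -> phi v != set0),
      (forall u v, u != v -> [disjoint phi u & phi v]),
      (forall v, {in phi v &, forall a b,
          connect [rel a' b' | [&& adjH a' b', a' \in phi v & b' \in phi v]] a b})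
    & (forall u v, u \in S -> v \in S -> E u v ->
          exists a b, [/\ a \in phi u, b \in phi v & adjH a b])].

Definition sigma_rel n m c (u : chim_vertex n m c)
    (w : chim_vertex (2 * n) (2 * m) c) : bool :=
  (cz w == cz u) &&
  (if cz u <= c - 1
   then ((cx w == 2 * cx u) || (cx w == 2 * cx u + 1)) && (cy w == 2 * cy u)
   else (cx w == 2 * cx u) && ((cy w == 2 * cy u) || (cy w == 2 * cy u + 1))).

Definition phi_dagger n m c (V : finType) (phi : V -> {set chim_vertex n m c})
    (v : V) : {set chim_vertex (2 * n) (2 * m) c} :=
  [set w | [exists u in phi v, sigma_rel u w]].

(* Main.v *)
Require Import Defs.
From mathcomp Require Import all_boot.
From mathcomp Require Import zify.

Lemma dbl_lt {k} (x : 'I_k) : 2 * x < 2 * k.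
Proof. have := ltn_ord x; lia. Qed.
Lemma dbl1_lt {k} (x : 'I_k) : 2 * x + 1 < 2 * k.
Proof. have := ltn_ord x; lia. Qed.

Set Implicit Arguments.
Section S.
Variables n m c : nat.
Hypothesis c0 : 0 < c.

Definition bse (u : chim_vertex n m c) : chim_vertex (2 * n) (2 * m) c :=
  (Ordinal (dbl_lt u.1.1), Ordinal (dbl_lt u.1.2), u.2).
Definition tp (u : chim_vertex n m c) : chim_vertex (2 * n) (2 * m) c :=
  if cz u < c then (Ordinal (dbl1_lt u.1.1), Ordinal (dbl_lt u.1.2), u.2)
  else (Ordinal (dbl_lt u.1.1), Ordinal (dbl1_lt u.1.2), u.2).

Lemma sigma_coord (u : chim_vertex n m c) (w : chim_vertex (2*n) (2*m) c) : sigma_rel u w ->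
  [/\ cx w %/ 2 = cx u, cy w %/ 2 = cy u & cz w = cz u].
Proof.
rewrite /sigma_rel; case: ifP => _ H; split; lia.
Qed.

Lemma sigma_inj (u u' : chim_vertex n m c) (w : chim_vertex (2*n) (2*m) c) : sigma_rel u w -> sigma_rel u' w -> u = u'.
Proof.
move=> /sigma_coord [h1 h2 h3] /sigma_coord [h1' h2' h3'].
case: u h1 h2 h3 => [[x y] z]; case: u' h1' h2' h3' => [[x' y'] z'].
rewrite /cx /cy /cz /= => ? ? ? ? ? ?.
have ex : x = x' by apply: ord_inj; lia.
have ey : y = y' by apply: ord_inj; lia.
have ez : z = z' by apply: ord_inj; lia.
by rewrite ex ey ez.
Qed.

Lemma sigma_bse (u : chim_vertex n m c) : sigma_rel u (bse u).
Proof. case: u => [[x y] z]; rewrite /sigma_rel /bse /cx /cy /cz /=; case: ifP => _; lia. Qed.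

Lemma sigma_tp (u : chim_vertex n m c) : sigma_rel u (tp u).
Proof.
case: u => [[x y] z]; rewrite /sigma_rel /tp /cx /cy /cz /=.
case: (ltnP z c) => h /=.
- rewrite (_ : (z <= c - 1) = true) /=; lia.
- rewrite (_ : (z <= c - 1) = false) /=; lia.
Qed.

Lemma sigma_char (u : chim_vertex n m c) (w : chim_vertex (2*n) (2*m) c) : sigma_rel u w -> w = bse u \/ w = tp u.
Proof.
case: u => [[x y] z]; case: w => [[a b] d]; rewrite /sigma_rel /bse /tp /cx /cy /cz /=.
case: (ltnP z c) => h.
- rewrite (_ : (z <= c - 1) = true) /=; last by lia.
  move=> H.
  have -> : d = z by apply: ord_inj; lia.
  have -> : b = Ordinal (dbl_lt y) by apply: ord_inj => /=; lia.
  have [ea|ea] : (a : nat) = 2 * x \/ (a : nat) = 2 * x + 1 by lia.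
  + by left; congr (_, _, _); apply: ord_inj.
  + by right; congr (_, _, _); apply: ord_inj.
- rewrite (_ : (z <= c - 1) = false) /=; last by lia.
  move=> H.
  have -> : d = z by apply: ord_inj; lia.
  have -> : a = Ordinal (dbl_lt x) by apply: ord_inj => /=; lia.
  have [eb|eb] : (b : nat) = 2 * y \/ (b : nat) = 2 * y + 1 by lia.
  + by left; congr (_, _, _); apply: ord_inj.
  + by right; congr (_, _, _); apply: ord_inj.
Qed.

Lemma adj_bse_tp (u : chim_vertex n m c) : chim_adj (bse u) (tp u).
Proof.
case: u => [[x y] z]; rewrite /chim_adj /chim_step /bse /tp /cx /cy /cz /=.
case: (ltnP z c) => h /=; lia.
Qed.

Lemma step_lift (u u' : chim_vertex n m c) : chim_step u u' ->
  chim_adj (bse u) (bse u') \/ chim_adj (tp u) (bse u').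
Proof.
case: u => [[x y] z]; case: u' => [[x' y'] z'].
rewrite /chim_adj /chim_step /bse /tp /cx /cy /cz /= => H.
case: (ltnP z c) => h /=.
- case: (boolP ((x : nat) == x')) => e.
  + left; lia.
  + right; lia.
- case: (boolP ((y : nat) == y')) => e.
  + left; lia.
  + right; lia.
Qed.

End S.
Unset Implicit Arguments.

Lemma connect_map (T T' : finType) (e : rel T) (e' : rel T') (f : T -> T') :
  (forall a b, e a b -> connect e' (f a) (f b)) ->
  forall a b, connect e a b -> connect e' (f a) (f b).
Proof.
move=> H a b /connectP [p pth ->]; elim: p a pth => [|x p IH] a /=.
  by rewrite connect0.
by case/andP => h1 h2; apply: connect_trans (H _ _ h1) (IH _ h2).
Qed.

Theorem mainTheorem1 (n m c : nat) (V : finType) (E : rel V)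
    (S : {set V}) (phi : V -> {set chim_vertex n m c}) :
  0 < n -> 0 < m -> 0 < c ->
  feasible_embedding E S (@chim_adj n m c) phi ->
  feasible_embedding E S (@chim_adj (2 * n) (2 * m) c) (phi_dagger phi).
Proof.
move=> _ _ c0 [h1 h2 h3 h4 h5].
have memD v u w : u \in phi v -> sigma_rel u w -> w \in phi_dagger phi v.
  by move=> hu hw; rewrite inE; apply/existsP; exists u; rewrite hu.
have memDE v w : w \in phi_dagger phi v -> exists2 u, u \in phi v & sigma_rel u w.
  by rewrite inE => /existsP [u /andP [hu hw]]; exists u.
split.
- move=> v /h1 e; apply/setP => w; rewrite !inE; apply/negbTE/existsP => -[u].
  by rewrite e inE.
- move=> v /h2 /set0Pn [u hu]; apply/set0Pn; exists (bse u).
  exact: memD hu (sigma_bse c0 u).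
- move=> u v /h3 d; rewrite -setI_eq0; apply/negPn/negP => /set0Pn [w]; rewrite inE => /andP [H1 H2].
  case: (memDE _ _ H1) => a ha sa; case: (memDE _ _ H2) => b hb sb.
  have eab : a = b by apply: sigma_inj sa sb.
  subst b.
  by rewrite (disjointFr d ha) in hb.
- move=> v.
  set e' := [rel a' b' | [&& chim_adj a' b', a' \in phi_dagger phi v
                                          & b' \in phi_dagger phi v]].
  have syme : symmetric e'.
    move=> a b; rewrite /e' /= /chim_adj orbC; case: (_ || _) => //=.
    by rewrite andbC.
  have bt u : u \in phi v -> connect e' (bse u) (tp u).
    move=> hu; apply: connect1; rewrite /e' /= adj_bse_tp //.
    by rewrite (memD _ _ _ hu (sigma_bse c0 u)) (memD _ _ _ hu (sigma_tp c0 u)).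
  have tob u w : u \in phi v -> sigma_rel u w -> connect e' (bse u) w.
    move=> hu /(sigma_char c0) [->|->]; [exact: connect0 | exact: bt].
  have stepc u u' : u \in phi v -> u' \in phi v -> chim_step u u' ->
      connect e' (bse u) (bse u').
    move=> hu hu' /(step_lift c0) [H|H].
      apply: connect1; rewrite /e' /= H.
      by rewrite (memD _ _ _ hu (sigma_bse c0 u)) (memD _ _ _ hu' (sigma_bse c0 u')).
    apply: connect_trans (bt _ hu) (connect1 _); rewrite /e' /= H.
    by rewrite (memD _ _ _ hu (sigma_tp c0 u)) (memD _ _ _ hu' (sigma_bse c0 u')).
  have key : forall a b, connect [rel a' b' | [&& chim_adj a' b', a' \in phi v & b' \in phi v]] a b ->
      connect e' (bse a) (bse b).
    apply: connect_map => a b /= /and3P [ad ha hb].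
    case/orP: ad => st; first exact: stepc.
    by rewrite (sym_connect_sym syme); apply: stepc.
  move=> a b H1 H2; case: (memDE _ _ H1) => u hu sa; case: (memDE _ _ H2) => u' hu' sb.
  apply: connect_trans (connect_trans _ (tob _ _ hu' sb)).
    by rewrite (sym_connect_sym syme); apply: tob hu sa.
  exact: key (h4 v u u' hu hu').
- move=> u v hu hv /(h5 u v hu hv) [a [b [ha hb ad]]].
  case/orP: ad => /(step_lift c0) [H|H].
  + by exists (bse a), (bse b); split => //; [exact: memD ha (sigma_bse c0 a)|exact: memD hb (sigma_bse c0 b)].
  + by exists (tp a), (bse b); split => //; [exact: memD ha (sigma_tp c0 a)|exact: memD hb (sigma_bse c0 b)].
  + exists (bse a), (bse b); split; [exact: memD ha (sigma_bse c0 a)|exact: memD hb (sigma_bse c0 b)|].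
    by rewrite /chim_adj orbC.
  + exists (bse a), (tp b); split; [exact: memD ha (sigma_bse c0 a)|exact: memD hb (sigma_tp c0 b)|].
    by rewrite /chim_adj orbC.
Qed.
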